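(* For every integer $L\geq 0$, \[ \sum_{j=-\infty}^{\infty} (-1)^j q^{j^2} \left(\frac{j+1}{3}\right) {2L+1 \brack L+j}_{q^2} = \frac{(q^3;q^6)_L}{(q;q^2)_{L+1}}\,\bigl(1-q^{2(1+2L)}\bigr). \]
   Context: For a variable $a$ and integer $n\ge 0$, $(a;q)_n=(1-a)(1-aq)\cdots(1-aq^{n-1})$ (with $(a;q)_0=1$). The $q$-binomial coefficient is ${A \brack B}_q=\frac{(q;q)_A}{(q;q)_B(q;q)_{A-B}}$ if $0\le B\le A$ are integers, and $0$ otherwise; ${A\brack B}_{q^2}$ is the same with $q$ replaced by $q^2$. $\left(\frac{j}{3}\right)$ is the Legendre symbol modulo 3: it equals $1$ if $j\equiv 1 \pmod 3$, $-1$ if $j\equiv -1\pmod 3$, and $0$ if $3\mid j$. *)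

(* Defs.v *)
(* The identity is an identity of rational functions in q:
   we work in the field K = Q(q) realised as fractions of integer polynomials,
   with q the indeterminate. *)
From HB Require Import structures.
From mathcomp Require Import all_boot all_order all_algebra.
Set Implicit Arguments. Unset Strict Implicit. Unset Printing Implicit Defensive.
Import Order.TTheory GRing.Theory Num.Theory.
Local Open Scope ring_scope.

Definition K : fieldType := {fraction {poly int}}.

Definition qv : K := tofrac ('X : {poly int}).

Definition qpoch (a q : K) (n : nat) : K := \prod_(i < n) (1 - a * q ^+ i).

Definition qbinom (q : K) (A B : int) : K :=
  if (0 <= B) && (B <= A) then
    qpoch q q `|A|%N / (qpoch q q `|B|%N * qpoch q q `|A - B|%N)
  else 0.

(* Legendre symbol modulo 3, valued in K *)
Definition leg3 (j : int) : K :=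
  if (j %% 3)%Z == 1 then 1 else if (j %% 3)%Z == 2 then -1 else 0.

Definition zsum (f : int -> K) (N : nat) : K :=
  \sum_(i < (2 * N).+1) f (i%:Z - N%:Z).

Definition lhs_term (q : K) (L : nat) (j : int) : K :=
  (-1) ^+ `|j|%N * q ^+ (`|j| ^ 2)%N * leg3 (j + 1)
  * qbinom (q ^+ 2) (2 * L + 1)%:Z (L%:Z + j).

(* Main.v *)
Require Import Defs.
From HB Require Import structures.
From mathcomp Require Import all_boot all_order all_algebra.
From mathcomp Require Import zify ring lra.
Import Order.TTheory GRing.Theory Num.Theory.
Set Implicit Arguments. Unset Strict Implicit. Unset Printing Implicit Defensive.
Local Open Scope ring_scope.

Definition qp (F : comRingType) (a q : F) (n : nat) : F := \prod_(i < n) (1 - a * q ^+ i).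

Fixpoint qb {F : comRingType} (p : F) (n k : nat) : F :=
  match n, k with
  | 0, 0 => 1
  | 0, _ => 0
  | n'.+1, 0 => 1
  | n'.+1, k'.+1 => qb p n' k'.+1 + p ^+ (n' - k') * qb p n' k'
  end.

Lemma qb_n0 (F : comRingType) (p : F) n : qb p n 0 = 1. Proof. by case: n. Qed.

Lemma qb_gt (F : comRingType) (p : F) n k : (n < k)%N -> qb p n k = 0.
Proof.
elim: n k => [|n IH] [|k] //= H.
by rewrite !IH ?mulr0 ?addr0 //; lia.
Qed.

Lemma qpS (F : comRingType) (p : F) n : qp p p n.+1 = qp p p n * (1 - p ^+ n.+1).
Proof. by rewrite /qp big_ord_recr /= exprS. Qed.

Lemma qp0 (F : comRingType) (p : F) : qp p p 0 = 1.
Proof. by rewrite /qp big_ord0. Qed.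

Lemma alg_aux (F : comRingType) (A B P1 P2 P3 x y : F) :
  A * P1 * (1 - x) * P2 = P3 -> B * P1 * P2 * (1 - y) = P3 ->
  (A + y * B) * (P1 * (1 - x)) * (P2 * (1 - y)) = P3 * (1 - y * x).
Proof.
move=> H1 H2.
transitivity ((1 - y) * (A * P1 * (1 - x) * P2) + y * (1 - x) * (B * P1 * P2 * (1 - y))).
  by ring.
by rewrite H1 H2; ring.
Qed.

Lemma qb_fact (F : comRingType) (p : F) n k : (k <= n)%N ->
  qb p n k * qp p p k * qp p p (n - k) = qp p p n.
Proof.
elim: n k => [|n IH] [|k] //=.
- by move=> _; rewrite qp0 !mulr1.
- by move=> _; rewrite qp0 mulr1 mul1r.
move=> Hk.
have Hk' : (k <= n)%N by lia.
case: (ltnP k n) => Hkn.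
- have E1 := IH k.+1 Hkn.
  have E2 := IH k Hk'.
  rewrite subSS.
  have Em : (n - k = (n - k.+1).+1)%N by lia.
  rewrite Em (qpS p k) (qpS p (n - k.+1)) (qpS p n).
  have -> : p ^+ n.+1 = p ^+ (n - k.+1).+1 * p ^+ k.+1.
    by rewrite -exprD; congr (_ ^+ _); lia.
  apply: alg_aux; first by rewrite -E1 (qpS p k) !mulrA.
  by rewrite -E2 Em (qpS p (n - k.+1)) !mulrA.
- have -> : k = n by lia.
  rewrite subnn subSS subnn qb_gt // add0r expr0 mul1r qp0 mulr1.
  move: (IH n (leqnn n)); rewrite subnn qp0 mulr1 => E.
  by rewrite qpS mulrA E.
Qed.

Definition acoef (F : comRingType) (p c : F) n k := qb p n k * (-1) ^+ k * p ^+ 'C(k, 2) * c ^+ k.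

Lemma acoefS (F : comRingType) (p c : F) n k : (k <= n)%N ->
  acoef p c n.+1 k.+1 = acoef p c n k.+1 - c * p ^+ n * acoef p c n k.
Proof.
move=> Hk; rewrite /acoef /= binS bin1 exprD.
have -> : p ^+ n = p ^+ (n - k) * p ^+ k by rewrite -exprD subnK.
rewrite !exprS; ring.
Qed.

Lemma acoef_gt (F : comRingType) (p c : F) n k : (n < k)%N -> acoef p c n k = 0.
Proof. by move=> H; rewrite /acoef qb_gt // !mul0r. Qed.

Lemma acoef0 (F : comRingType) (p c : F) n : acoef p c n 0 = 1.
Proof. by rewrite /acoef qb_n0 !expr0 !mulr1. Qed.

Lemma qbinthm (F : comRingType) (p c : F) n :
  \prod_(i < n) (1 - (c * p ^+ i)%:P * 'X) =
  \sum_(k < n.+1) (acoef p c n k)%:P * 'X^k.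
Proof.
elim: n => [|n IH].
  by rewrite big_ord0 big_ord1 acoef0 expr0 mulr1.
rewrite big_ord_recr /= IH [in RHS]big_ord_recl /= acoef0 expr0 mulr1.
have E : forall i : 'I_n.+1, (acoef p c n.+1 (bump 0 i))%:P * 'X^(bump 0 i)
   = (acoef p c n i.+1)%:P * 'X^(i.+1) - (c * p^+n * acoef p c n i)%:P * 'X^(i.+1).
  move=> i; rewrite /bump add1n acoefS; last by have := ltn_ord i.
  by rewrite polyCB mulrBl.
rewrite (eq_bigr _ (fun i _ => E i)) sumrB addrA.
have -> : 1 + \sum_(i < n.+1) (acoef p c n i.+1)%:P * 'X^(i.+1)
   = \sum_(i < n.+2) (acoef p c n i)%:P * 'X^i.
  by rewrite [in RHS]big_ord_recl acoef0 expr0 mulr1.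
rewrite [\sum_(i < n.+2) _]big_ord_recr /= acoef_gt // polyC0 mul0r addr0.
rewrite mulrBr mulr1; congr (_ - _).
rewrite big_distrl /=; apply: eq_bigr => k _.
rewrite !polyCM exprS; ring.
Qed.

Definition chi (F : comRingType) (m : nat) : F :=
  if (m %% 3 == 1)%N then 1 else if (m %% 3 == 2)%N then -1 else 0.
Arguments chi : clear implicits.

Lemma chi_mod (F : comRingType) m : chi F m = chi F (m %% 3)%N.
Proof. by rewrite /chi modn_mod. Qed.

Lemma chi_sum3 (F : comRingType) i : chi F (i + 2) + chi F (i + 1) + chi F (i + 0) = 0.
Proof.
rewrite /chi -!(modnDml i).
case: (i %% 3)%N (ltn_pmod i (isT : (0 < 3)%N)) => [|[|[|r]]] // _ /=.
- ring.
- ring.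
- ring.
Qed.

Definition psi (F : comRingType) (P : {poly F}) : F := \sum_(i < size P) P`_i * chi F i.

Lemma psi_bound (F : comRingType) (P : {poly F}) n : (size P <= n)%N ->
  psi P = \sum_(i < n) P`_i * chi F i.
Proof.
move=> H; rewrite /psi -(subnKC H) big_split_ord /=.
rewrite [X in _ = _ + X]big1 ?addr0 // => i _.
by rewrite nth_default ?mul0r // leq_addr.
Qed.

Lemma psiD (F : comRingType) (P Q : {poly F}) : psi (P + Q) = psi P + psi Q.
Proof.
rewrite (psi_bound (size_polyD P Q)) (@psi_bound _ P (maxn (size P) (size Q))) ?leq_maxl //.
rewrite (@psi_bound _ Q (maxn (size P) (size Q))) ?leq_maxr // -big_split.
by apply: eq_bigr => i _; rewrite coefD mulrDl.
Qed.

Lemma psiC (F : comRingType) (a : F) (P : {poly F}) : psi (a%:P * P) = a * psi P.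
Proof.
rewrite mul_polyC (psi_bound (size_scale_leq a P)) /psi mulr_sumr.
by apply: eq_bigr => i _; rewrite coefZ mulrA.
Qed.

Lemma psi0 (F : comRingType) : psi (0 : {poly F}) = 0.
Proof. by rewrite /psi size_poly0 big_ord0. Qed.

Lemma psi_sum (F : comRingType) (I : Type) (r : seq I) (Pr : pred I) (G : I -> {poly F}) :
  psi (\sum_(i <- r | Pr i) G i) = \sum_(i <- r | Pr i) psi (G i).
Proof. exact: (big_morph (@psi F) (@psiD F) (@psi0 F)). Qed.

Lemma psiXn (F : comRingType) k : psi ('X^k : {poly F}) = chi F k.
Proof.
rewrite (@psi_bound _ _ k.+1) ?size_polyXn // big_ord_recr /= coefXn eqxx mul1r.
rewrite big1 ?add0r // => i _; rewrite coefXn.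
by rewrite (ltn_eqF (ltn_ord i)) mul0r.
Qed.

Lemma psiMXn (F : comRingType) (P : {poly F}) k :
  psi (P * 'X^k) = \sum_(i < size P) P`_i * chi F (i + k).
Proof.
rewrite -{1}(coefK P) poly_def mulr_suml psi_sum.
by apply: eq_bigr => i _; rewrite -mul_polyC -mulrA -exprD psiC psiXn.
Qed.

Definition Phi (F : comRingType) : {poly F} := 'X^2 + 'X + 1.
Arguments Phi : clear implicits.

Lemma psiPhi (F : comRingType) (C : {poly F}) : psi (Phi F * C) = 0.
Proof.
have -> : Phi F * C = C * 'X^2 + C * 'X^1 + C * 'X^0.
  by rewrite /Phi expr1 expr0; ring.
rewrite !psiD !psiMXn -!big_split big1 // => i _.
by rewrite /= -!mulrDr chi_sum3 mulr0.
Qed.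

Lemma prod_mod (F : comRingType) n (g h : nat -> {poly F}) :
  exists C, \prod_(i < n) (Phi F * g i + h i) = Phi F * C + \prod_(i < n) h i.
Proof.
elim: n => [|n [C IH]]; first by exists 0; rewrite !big_ord0 mulr0 add0r.
exists (C * (Phi F * g n + h n) + (\prod_(i < n) h i) * g n).
rewrite !big_ord_recr /= IH; ring.
Qed.

Lemma pair_lemma (F : fieldType) (u v : F) : u * v = 1 ->
  (1 - v%:P * 'X) * (1 - u%:P * 'X) = Phi F * 1 + (- (1 + u + v))%:P * 'X.
Proof.
move=> h.
have -> : (1 - v%:P * 'X) * (1 - u%:P * 'X) = 1 - (u + v)%:P * 'X + (u * v)%:P * 'X^2.
  by rewrite polyCD polyCM; ring.
rewrite h /Phi polyCN !polyCD polyC1; ring.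
Qed.

Definition bb (F : fieldType) (q : F) (i : nat) : F :=
  1 + q ^+ (2 * i + 1) + (q ^+ (2 * i + 1))^-1.

Lemma factor_psi (F : fieldType) (q : F) L : q != 0 ->
  psi ((\prod_(i < (2 * L).+1) (1 - ((q / q ^+ (2 * L)) * (q ^+ 2) ^+ i)%:P * 'X)) * 'X^((2 * L).+1))
  = (-1) ^+ L * (\prod_(i < L) bb q i) * (1 + q ^+ (2 * L + 1)).
Proof.
move=> hq.
set c := q / q ^+ (2 * L).
set f := fun i : nat => 1 - (c * (q ^+ 2) ^+ i)%:P * 'X.
have E1 : \prod_(i < (2 * L).+1) f i = (\prod_(i < L) (f (L - i.+1)%N * f (L + i)%N)) * f (2 * L)%N.
  rewrite big_ord_recr /=; congr (_ * _).
  have -> : (2 * L = L + L)%N by lia.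
  rewrite big_split_ord /= big_split /=; congr (_ * _).
  rewrite -(big_mkord xpredT f) big_rev_mkord subn0.
  by apply: eq_bigr.
have E2 : forall i : 'I_L, f (L - i.+1)%N * f (L + i)%N
    = Phi F * 1 + (- bb q i)%:P * 'X.
  move=> i; rewrite /f /bb.
  have hi := ltn_ord i.
  have cu : c * (q ^+ 2) ^+ (L + i) = q ^+ (2 * i + 1).
    rewrite /c -exprM mulnDr !exprD expr1; field.
    by rewrite expf_neq0.
  have cv : c * (q ^+ 2) ^+ (L - i.+1) = (q ^+ (2 * i + 1))^-1.
    have EL : q ^+ (2 * L) = (q ^+ 2) ^+ (L - i.+1) * q ^+ (2 * i + 1) * q.
      by rewrite -exprM -!exprD -exprSr; congr (_ ^+ _); lia.
    rewrite /c EL; field.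
    by rewrite !expf_neq0 // hq.
  rewrite cu cv; apply: pair_lemma.
  by rewrite mulfV // expf_neq0.
rewrite E1 (eq_bigr _ (fun i _ => E2 i)).
have [C HC] := prod_mod L (fun _ => 1) (fun i => (- bb q i)%:P * 'X).
rewrite HC big_split /= -rmorph_prod prodr_const card_ord prodrN card_ord.
have Ew : c * (q ^+ 2) ^+ (2 * L) = q ^+ (2 * L + 1).
  have -> : (q ^+ 2) ^+ (2 * L) = q ^+ (2 * L) * q ^+ (2 * L).
    by rewrite -exprM -exprD; congr (_ ^+ _); lia.
  rewrite /c exprD expr1; field.
  by rewrite expf_neq0.
rewrite /f Ew.
set B := (-1) ^+ L * \prod_(i < L) bb q i.
have -> : (Phi F * C + B%:P * 'X^L) * (1 - (q ^+ (2 * L + 1))%:P * 'X) * 'X^((2 * L).+1)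
   = Phi F * (C * (1 - (q ^+ (2 * L + 1))%:P * 'X) * 'X^((2 * L).+1))
     + B%:P * ('X^L * 'X^((2 * L).+1) + (- q ^+ (2 * L + 1))%:P * ('X * ('X^L * 'X^((2 * L).+1)))).
  rewrite polyCN; ring.
rewrite -exprD -exprS.
rewrite psiD psiPhi add0r psiC psiD psiC !psiXn.
have -> : chi F (L + (2 * L).+1) = 1.
  by rewrite /chi (_ : ((L + (2 * L).+1) %% 3 = 1)%N) //; lia.
have -> : chi F (L + (2 * L).+1).+1 = -1.
  by rewrite /chi (_ : ((L + (2 * L).+1).+1 %% 3 = 2)%N) //; lia.
rewrite /B; ring.
Qed.

Lemma coef_side (F : comRingType) (p c : F) N :
  psi ((\prod_(i < N) (1 - (c * p ^+ i)%:P * 'X)) * 'X^N)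
  = \sum_(k < N.+1) acoef p c N k * chi F (k + N).
Proof.
rewrite qbinthm mulr_suml psi_sum; apply: eq_bigr => k _.
by rewrite -mulrA -exprD psiC psiXn.
Qed.

Definition qbinomG (F : fieldType) (q : F) (A B : int) : F :=
  if (0 <= B) && (B <= A) then
    qp q q `|A|%N / (qp q q `|B|%N * qp q q `|A - B|%N)
  else 0.

Definition leg3G (F : fieldType) (j : int) : F :=
  if (j %% 3)%Z == 1 then 1 else if (j %% 3)%Z == 2 then -1 else 0.
Arguments leg3G : clear implicits.

Definition zsumG (F : fieldType) (f : int -> F) (N : nat) : F :=
  \sum_(i < (2 * N).+1) f (i%:Z - N%:Z).

Definition lhsG (F : fieldType) (q : F) (L : nat) (j : int) : F :=
  (-1) ^+ `|j|%N * q ^+ (`|j| ^ 2)%N * leg3G F (j + 1)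
  * qbinomG (q ^+ 2) (2 * L + 1)%:Z (L%:Z + j).

Lemma leg3_chi (F : fieldType) (L k : nat) :
  leg3G F (k%:Z - L%:Z + 1) = chi F (k + (2 * L).+1).
Proof.
rewrite /leg3G.
have -> : ((k%:Z - L%:Z + 1) %% 3)%Z = ((k + (2 * L).+1)%N%:Z %% 3)%Z.
  have -> : (k + (2 * L).+1)%N%:Z = L%:Z * 3 + (k%:Z - L%:Z + 1) by lia.
  by rewrite modzMDl.
rewrite /chi modz_nat.
case: ((k + (2 * L).+1) %% 3)%N (ltn_pmod (k + (2 * L).+1) (isT : (0 < 3)%N)) => [|[|[|r]]] //.
Qed.

Lemma qp_neq0 (F : fieldType) (q : F) n :
  (forall n, (0 < n)%N -> 1 - q ^+ n != 0) -> qp (q ^+ 2) (q ^+ 2) n != 0.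
Proof.
move=> hn; apply/prodf_neq0 => i _.
rewrite -exprS -exprM; apply: hn; lia.
Qed.

Lemma bin2_aux k : (2 * 'C(k, 2) + k = k * k)%N.
Proof.
elim: k => [|k IH] //.
rewrite binS bin1; lia.
Qed.

Lemma termB (F : fieldType) (q : F) L k : q != 0 ->
  (forall n, (0 < n)%N -> 1 - q ^+ n != 0) -> (k <= (2 * L).+1)%N ->
  lhsG q L (k%:Z - L%:Z) = (-1) ^+ L * q ^+ (L ^ 2) *
    (acoef (q ^+ 2) (q / q ^+ (2 * L)) (2 * L).+1 k * chi F (k + (2 * L).+1)).
Proof.
move=> hq hn hk.
rewrite /lhsG leg3_chi.
have -> : L%:Z + (k%:Z - L%:Z) = k%:Z by lia.
have -> : qbinomG (q ^+ 2) (2 * L + 1)%:Z k%:Z = qb (q ^+ 2) (2 * L).+1 k.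
  rewrite /qbinomG (_ : (0 <= k%:Z) && (k%:Z <= (2 * L + 1)%:Z) = true); last by lia.
  rewrite subzn ?addn1 // !absz_nat.
  by rewrite -(qb_fact (q ^+ 2) hk) -(mulrA (qb _ _ _)) mulfK // mulf_neq0 // qp_neq0.
set d := `|k%:Z - L%:Z|%N.
have He : (d ^ 2 + 2 * L * k = L ^ 2 + k * k)%N.
  rewrite /d; case: (leqP k L) => h.
  - rewrite distnEr //; nia.
  - rewrite distnEl; [nia | lia].
have Hs : (-1) ^+ (L + k) = (-1) ^+ d * ((-1) ^+ 2) ^+ (minn k L) :> F.
  rewrite -exprM -exprD; congr (_ ^+ _).
  rewrite /d; case: (leqP k L) => h.
  - rewrite distnEr //; lia.
  - rewrite distnEl; lia.
rewrite sqrrN expr1n expr1n mulr1 in Hs.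
have Hq : q ^+ (d ^ 2) = q ^+ (L ^ 2) * q ^+ (2 * 'C(k, 2)) * q ^+ k / q ^+ (2 * L * k).
  apply: (mulIf (expf_neq0 (2 * L * k) hq)).
  rewrite mulfVK ?expf_neq0 // -!exprD He; congr (_ ^+ _).
  have := bin2_aux k; lia.
rewrite Hq -Hs /acoef exprD expr_div_n -!exprM.
field.
by rewrite expf_neq0.
Qed.

Lemma lhsG_out (F : fieldType) (q : F) L (j : int) :
  ~~ ((0 <= L%:Z + j) && (L%:Z + j <= (2 * L + 1)%:Z)) -> lhsG q L j = 0.
Proof. by move=> h; rewrite /lhsG /qbinomG (negbTE h) mulr0. Qed.

Lemma zsum_red (F : fieldType) (q : F) L M : (L < M)%N ->
  zsumG (lhsG q L) M = \sum_(k < (2 * L).+2) lhsG q L (k%:Z - L%:Z).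
Proof.
move=> hM; rewrite /zsumG.
have -> : ((2 * M).+1 = ((M - L) + (2 * L).+2) + (M - L.+1))%N by lia.
rewrite big_split_ord /= big_split_ord /=.
rewrite [X in X + _ + _]big1 ?add0r; last first.
  move=> i _; apply: lhsG_out; have := ltn_ord i; lia.
rewrite [X in _ + X]big1 ?addr0; last first.
  move=> i _; apply: lhsG_out; have := ltn_ord i; lia.
apply: eq_bigr => i _; congr (lhsG q L _); lia.
Qed.

Lemma sq_prod (F : fieldType) (q : F) L : q ^+ (L ^ 2) = \prod_(i < L) q ^+ (2 * i + 1).
Proof.
elim: L => [|L IH]; first by rewrite big_ord0 expr0.
rewrite big_ord_recr /= -IH -exprD; congr (_ ^+ _); nia.
Qed.

Lemma mainG (F : fieldType) (q : F) L : q != 0 ->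
  (forall n, (0 < n)%N -> 1 - q ^+ n != 0) ->
  exists N0 : nat, forall N : nat, (N0 <= N)%N ->
    zsumG (lhsG q L) N =
    qp (q ^+ 3) (q ^+ 6) L / qp q (q ^+ 2) L.+1 * (1 - q ^+ (2 * (1 + 2 * L))).
Proof.
move=> hq hn; exists L.+1 => M hM.
rewrite zsum_red //.
rewrite (eq_bigr _ (fun (k : 'I_(2 * L).+2) _ => termB hq hn (ltn_ord k))).
rewrite -mulr_sumr -coef_side factor_psi //.
rewrite sq_prod.
set u := fun i : nat => q ^+ (2 * i + 1).
have hu : forall i, u i != 0 by move=> i; rewrite expf_neq0.
have hu1 : forall i, 1 - u i != 0 by move=> i; apply: hn; lia.
have E1 : qp (q ^+ 3) (q ^+ 6) L = \prod_(i < L) (u i * bb q i) * \prod_(i < L) (1 - u i).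
  rewrite /qp -big_split /=; apply: eq_bigr => i _.
  have -> : q ^+ 3 * (q ^+ 6) ^+ i = u i ^+ 3.
    by rewrite /u -!exprM -exprD; congr (_ ^+ _); lia.
  rewrite /bb -/(u i); field; exact: hu.
have E2 : qp q (q ^+ 2) L.+1 = \prod_(i < L) (1 - u i) * (1 - u L).
  rewrite /qp big_ord_recr /=; congr (_ * _).
    by apply: eq_bigr => i _; rewrite /u -exprM -exprS addn1.
  by rewrite /u -exprM -exprS addn1.
have E3 : q ^+ (2 * (1 + 2 * L)) = u L ^+ 2.
  by rewrite /u -exprM; congr (_ ^+ _); lia.
rewrite E1 E2 E3 big_split /=.
have hP : \prod_(i < L) (1 - u i) != 0 by apply/prodf_neq0 => i _.
have hL := hu1 L.
have Hs : (-1) ^+ L * (-1) ^+ L = 1 :> F.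
  by rewrite -exprD addnn -mul2n exprM sqrrN !expr1n.
rewrite /u /=.
set P1 := \prod_(i < L) q ^+ (2 * i + 1).
set P2 := \prod_(i < L) bb q i.
set P3 := \prod_(i < L) (1 - q ^+ (2 * i + 1)).
transitivity (((-1) ^+ L * (-1) ^+ L) * (P1 * P2) * (1 + q ^+ (2 * L + 1))).
  ring.
rewrite Hs mul1r; field.
by rewrite hP hL.
Qed.

Lemma qv_neq0 : qv != 0.
Proof. by rewrite /qv tofrac_eq0 polyX_eq0. Qed.

Lemma qv_pow (n : nat) : (0 < n)%N -> 1 - qv ^+ n != 0.
Proof.
move=> hn; rewrite /qv -rmorphXn -tofrac1 -tofracB tofrac_eq0 subr_eq0.
apply/eqP => h; have := congr1 (fun p : {poly int} => size p) h; rewrite size_polyXn size_poly1; lia.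
Qed.

Theorem theorem2p3 (L : nat) :
  exists N0 : nat, forall N : nat, (N0 <= N)%N ->
    zsum (lhs_term qv L) N =
    qpoch (qv ^+ 3) (qv ^+ 6) L / qpoch qv (qv ^+ 2) L.+1
    * (1 - qv ^+ (2 * (1 + 2 * L))).
Proof.
exact: (mainG L qv_neq0 qv_pow).
Qed.
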